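(* Let $\underline{p}_g\le \bar{p}_g$, $p_{g0}\in\mathbb{R}$, and $\alpha_g\neq 0$ be real constants. For $\Delta\in\mathbb{R}$ define \[ p_{gk}(\Delta):=\mathrm{proj}_{[\underline{p}_g,\bar{p}_g]}(p_{g0}+\alpha_g\Delta),\qquad \tilde{p}_{gk}(\Delta):=\min\{\bar{p}_g,\,p_{g0}+\alpha_g\Delta\}, \] and for $\epsilon>0$ define \[ p_{gk}^\epsilon(\Delta):=\underline{p}_g+\epsilon\ln\left[1+\frac{\exp[(\bar{p}_g-\underline{p}_g)/\epsilon]}{1+\exp[(\bar{p}_g-p_{g0}-\alpha_g\Delta)/\epsilon]}\right],\qquad \tilde{p}_{gk}^{\epsilon}(\Delta):=\bar{p}_g-\epsilon\ln\left[1+\exp\left(\frac{\bar{p}_g-p_{g0}-\alpha_g\Delta}{\epsilon}\right)\right]. \] Then, as $\epsilon\to 0$, \[ \sup\left\{|p_{gk}^\epsilon(\Delta)-p_{gk}(\Delta)|:\Delta\in\mathbb{R}\right\}\to 0 \quad\text{and}\quad \sup\left\{|\tilde{p}_{gk}^{\epsilon}(\Delta)-\tilde{p}_{gk}(\Delta)|:\Delta\ge (\underline{p}_g-p_{g0})/\alpha_g\right\}\to 0. \]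
   Context: $\mathrm{proj}_{[a,b]}(x)=\max\{a,\min\{b,x\}\}$ denotes projection onto the interval $[a,b]$. In the application, $p_{gk}(\Delta)$ models the active power output of generator $g$ in contingency $k$ as a function of the system-wide imbalance $\Delta$, with base-case output $p_{g0}$, bounds $\underline{p}_g,\bar{p}_g$, and participation factor $\alpha_g$. *)

(* Defs.v *)
From HB Require Import structures.
From mathcomp Require Import all_boot all_order all_algebra.
From mathcomp Require Import all_classical all_reals all_analysis.
Set Implicit Arguments. Unset Strict Implicit. Unset Printing Implicit Defensive.
Import Order.TTheory GRing.Theory Num.Theory.
Local Open Scope ring_scope.

Definition proj_int {R : realType} (a b x : R) : R := Num.max a (Num.min b x).

Definition pgk {R : realType} (pl pu p0 alpha D : R) : R :=
  proj_int pl pu (p0 + alpha * D).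

Definition pgk_tilde {R : realType} (pu p0 alpha D : R) : R :=
  Num.min pu (p0 + alpha * D).

Definition pgk_eps {R : realType} (pl pu p0 alpha eps D : R) : R :=
  pl + eps * ln (1 + expR ((pu - pl) / eps)
                      / (1 + expR ((pu - p0 - alpha * D) / eps))).

Definition pgk_tilde_eps {R : realType} (pu p0 alpha eps D : R) : R :=
  pu - eps * ln (1 + expR ((pu - p0 - alpha * D) / eps)).

(* Main.v *)
Require Import Defs.
From HB Require Import structures.
From mathcomp Require Import all_boot all_order all_algebra.
From mathcomp Require Import all_classical all_reals all_analysis.
From mathcomp Require Import ring lra.
Import Order.TTheory GRing.Theory Num.Theory.
Local Open Scope classical_set_scope.
Local Open Scope ring_scope.


Lemma ln1E_ge {R : realType} (s : R) : Num.max 0 s <= ln (1 + expR s).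
Proof.
have h1 : 0 < 1 + expR s by rewrite addr_gt0 // expR_gt0.
rewrite ge_max; apply/andP; split.
  by apply: ln_ge0; rewrite lerDl expR_ge0.
rewrite -{1}(expRK s) ler_ln ?posrE ?expR_gt0 //.
by rewrite lerDr.
Qed.

Lemma ln1E_le {R : realType} (s : R) : ln (1 + expR s) <= Num.max 0 s + 1.
Proof.
case: (leP s 0) => hs.
  rewrite add0r.
  apply: le_trans (le_ln1Dx _) _; first by apply: lt_le_trans (expR_ge0 _); lra.
  by rewrite -expR0 ler_expR.
idtac.
have -> : 1 + expR s = expR s * (1 + expR (- s)).
  by rewrite mulrDr mulr1 -expRD addrN expR0 addrC.
rewrite lnM ?posrE ?expR_gt0 ?addr_gt0 //; last exact: expR_gt0.
rewrite expRK lerD2l.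
apply: le_trans (le_ln1Dx _) _; first by apply: lt_le_trans (expR_ge0 _); lra.
rewrite -expR0 ler_expR; lra.
Qed.

Lemma sp_bounds {R : realType} (eps t : R) : 0 < eps ->
  Num.max 0 t <= eps * ln (1 + expR (t / eps)) <= Num.max 0 t + eps.
Proof.
move=> he.
have hmax : Num.max 0 (t / eps) = Num.max 0 t / eps.
  case: (leP t 0) => ht.
    rewrite mul0r; apply/max_idPl.
    by rewrite mulr_le0_ge0 // ltW // invr_gt0.
  apply/max_idPr; by rewrite divr_ge0 // ltW.
apply/andP; split.
  have := ln1E_ge (t / eps); rewrite hmax -(ler_pM2l he) mulrCA divff ?gt_eqF // mulr1.
  by [].
have := ln1E_le (t / eps); rewrite hmax -(ler_pM2l he) mulrDr mulr1 mulrCA divff ?gt_eqF // mulr1.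
by [].
Qed.

Lemma min_max_eq {R : realType} (u x : R) : Num.min u x = u - Num.max 0 (u - x).
Proof.
case: (leP u x) => h.
  have -> : Num.max 0 (u - x) = 0 by apply/max_idPl; lra.
  by rewrite subr0.
have -> : Num.max 0 (u - x) = u - x by apply/max_idPr; lra.
by rewrite opprB addrC subrK.
Qed.

Lemma tilde_bound {R : realType} (u p0 a eps D : R) : 0 < eps ->
  `|pgk_tilde_eps u p0 a eps D - pgk_tilde u p0 a D| <= eps.
Proof.
move=> he; rewrite /pgk_tilde_eps /pgk_tilde min_max_eq.
have := @sp_bounds R eps (u - p0 - a * D) he.
have -> : u - (p0 + a * D) = u - p0 - a * D by rewrite opprD addrA.
set M := Num.max _ _; set L := eps * _ => /andP[h1 h2].
rewrite ler_norml; apply/andP; split; lra.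
Qed.

Lemma max_lip {R : realType} (l g m : R) : `|Num.max 0 (g - l) - Num.max 0 (m - l)| <= `|g - m|.
Proof.
have [h3|h3] := leP 0 (g - m); [rewrite (ger0_norm h3) | rewrite (ltr0_norm h3)];
case: (leP 0 (g - l)) => h1; case: (leP 0 (m - l)) => h2;
rewrite ler_norml; apply/andP; split; lra.
Qed.

Lemma main_bound {R : realType} (l u p0 a eps D : R) : 0 < eps ->
  `|pgk_eps l u p0 a eps D - pgk l u p0 a D| <= eps + eps.
Proof.
move=> he.
set g := pgk_tilde_eps u p0 a eps D.
set m := pgk_tilde u p0 a D.
have hg : `|g - m| <= eps by exact: tilde_bound.
set E := expR ((u - p0 - a * D) / eps).
have hE : 0 < 1 + E by rewrite addr_gt0 // expR_gt0.
have hid : expR ((u - l) / eps) / (1 + E) = expR ((g - l) / eps).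
  have -> : (g - l) / eps = (u - l) / eps + - ln (1 + E).
    rewrite /g /pgk_tilde_eps -/E; field; lra.
  by rewrite expRD expRN lnK.
rewrite /pgk_eps -/E hid.
have := @sp_bounds R eps (g - l) he; set L := eps * _ => /andP[h1 h2].
have hc : pgk l u p0 a D = l + Num.max 0 (m - l).
  rewrite /pgk /proj_int -/(pgk_tilde u p0 a D) -/m.
  case: (leP l m) => h.
    have -> : Num.max 0 (m - l) = m - l by apply/max_idPr; lra.
    by rewrite addrC subrK.
  have -> : Num.max 0 (m - l) = 0 by apply/max_idPl; lra.
  by rewrite addr0.
rewrite hc.
have := max_lip l g m; move: h1 h2; set A := Num.max 0 (g - l); set B := Num.max 0 (m - l) => h1 h2 hl.
have h3 : `|A - B| <= eps by apply: le_trans hl hg.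
move: h3; rewrite !ler_norml => /andP[h4 h5]; apply/andP; split; lra.
Qed.
Lemma sq_lemma (R : realType) (F : R -> R -> R) (P : set R) :
  P !=set0 ->
  (forall eps D, 0 < eps -> `|F eps D| <= eps + eps) ->
  (fun eps : R => ereal_sup [set (`|F eps D|)%:E | D in P]) @ 0^'+ --> (0 : \bar R)%E.
Proof.
move=> [D0 PD0] hb.
apply: (@squeeze_cvge _ _ _ _ (cst 0%E) _ (fun e => (e + e)%:E)).
- near=> e.
  have he : 0 < e by near: e; exact: nbhs_right_gt.
  apply/andP; split.
    apply: le_trans (ereal_sup_ubound _); last by exists D0.
    by rewrite /cst lee_fin.
  apply: ge_ereal_sup => _ [D _ <-].
  by rewrite lee_fin hb.
- exact: cvg_cst.
- apply: cvg_EFin; first exact: nearW.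
  have H : (fun e : R => e + e) @ (0:R)^'+ --> ((0:R) + 0).
    apply: cvg_at_right_filter.
    by apply: cvgD; exact: cvg_id.
  rewrite addr0 in H; exact: H.
Unshelve. all: end_near.
Qed.

Theorem proposition1 (R : realType) (pl pu p0 alpha : R)
  (hp : pl <= pu) (ha : alpha != 0) :
  ((fun eps : R => ereal_sup
      [set (`|pgk_eps pl pu p0 alpha eps D - pgk pl pu p0 alpha D|)%:E
      | D in [set: R]]) @ 0^'+ --> (0 : \bar R)%E)
  /\
  ((fun eps : R => ereal_sup
      [set (`|pgk_tilde_eps pu p0 alpha eps D - pgk_tilde pu p0 alpha D|)%:E
      | D in [set D : R | (pl - p0) / alpha <= D]]) @ 0^'+ --> (0 : \bar R)%E).
Proof.
split.
- apply: (@sq_lemma R (fun eps D => pgk_eps pl pu p0 alpha eps D - pgk pl pu p0 alpha D)).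
    by exists 0.
  move=> eps D he; exact: main_bound.
- apply: (@sq_lemma R (fun eps D => pgk_tilde_eps pu p0 alpha eps D - pgk_tilde pu p0 alpha D)).
    by exists ((pl - p0) / alpha) => /=.
  move=> eps D he; apply: le_trans (@tilde_bound R pu p0 alpha eps D he) _.
  by rewrite lerDl ltW.
Qed.
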